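(* Let $E$ be a finite-dimensional real affine space, let $\lambda$ be a positive Borel measure on $E$, and let $\mathcal{H}$ be a nonempty subset of $G(E)$ such that $\int e^{h}\,d\lambda=1$ for all $h\in\mathcal{H}$. Let $\overline{\mathcal{H}}$ be the closure of $\mathcal{H}$ in $G(E)$. Then for every $x\in E$ there exists $\bar h\in\overline{\mathcal{H}}$ with $\bar h(x)=\sup_{h\in\mathcal{H}}h(x)$; that is, maximum likelihood estimates always exist in $\overline{\mathcal{H}}$.
   Context: $G(E)$ is the set of generalized affine functions on $E$ (functions $E\to\mathbb{R}\cup\{\pm\infty\}$ that are both convex and concave in the extended-real-valued sense), with the topology of pointwise convergence. Here $e^{+\infty}=+\infty$, $e^{-\infty}=0$. *)

(* Defs.v *)
From HB Require Import structures.
From mathcomp Require Import all_boot all_order all_algebra.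
From mathcomp Require Import all_classical all_reals all_analysis.
Set Implicit Arguments. Unset Strict Implicit. Unset Printing Implicit Defensive.
Import Order.TTheory GRing.Theory Num.Theory.
Import numFieldNormedType.Exports.
Local Open Scope classical_set_scope.
Local Open Scope ring_scope.

(* The finite-dimensional real affine space E is modelled as 'rV[R]_n. *)

Definition convex_set_in (R : realType) (V : lmodType R) (S : set V) : Prop :=
  forall u v : V, forall t : R, 0 <= t <= 1 -> S u -> S v ->
    S ((1 - t) *: u + t *: v).

Definition epigraph (R : realType) n (f : 'rV[R]_n -> \bar R)
  : set ('rV[R]_n * R^o) := [set p | (f p.1 <= (p.2)%:E)%E].
Definition hypograph (R : realType) n (f : 'rV[R]_n -> \bar R)
  : set ('rV[R]_n * R^o) := [set p | ((p.2)%:E <= f p.1)%E].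

Definition econvex (R : realType) n (f : 'rV[R]_n -> \bar R) : Prop :=
  convex_set_in (epigraph f).
Definition econcave (R : realType) n (f : 'rV[R]_n -> \bar R) : Prop :=
  convex_set_in (hypograph f).

Definition gen_affine (R : realType) n : set ('rV[R]_n -> \bar R) :=
  [set f | econvex f /\ econcave f].

Definition borelE (R : realType) n :=
  g_sigma_algebraType (@open 'rV[R]_n).

(* Main.v *)
Require Import Defs.
From HB Require Import structures.
From mathcomp Require Import all_boot all_order all_algebra.
From mathcomp Require Import all_classical all_reals all_analysis.
From mathcomp Require Import ring lra.
Import Order.TTheory GRing.Theory Num.Theory.
Import numFieldNormedType.Exports.
Local Open Scope classical_set_scope.
Local Open Scope ring_scope.

Section Aux.
Variable R : realType.

Lemma ce_mid (r : R) : -1 <= r <= 1 -> contract (expand r) = r.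
Proof. by move=> h; rewrite expandK // inE ler_norml. Qed.
Lemma ce_hi (r : R) : 1 <= r -> contract (expand r) = 1.
Proof. by move=> h; rewrite expand1. Qed.
Lemma ce_lo (r : R) : r <= -1 -> contract (expand r) = -1.
Proof. by move=> h; rewrite expandN1. Qed.

Lemma ce_lip (x y : R) :
  `|contract (expand x) - contract (expand y)| <= `|x - y|.
Proof.
have h1 : x - y <= `|x - y| by apply: ler_norm.
have h2 : y - x <= `|x - y| by rewrite distrC; apply: ler_norm.
apply/ler_normlP.
have [hx|hx] := lerP x (-1); first rewrite (ce_lo _ hx).
  have [hy|hy] := lerP y (-1); first (rewrite (ce_lo _ hy); split; lra).
  have [hy'|hy'] := lerP 1 y; first (rewrite (ce_hi _ hy'); split; lra).
  rewrite ce_mid; first (split; lra). apply/andP; split; lra.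
have [hx'|hx'] := lerP 1 x; first rewrite (ce_hi _ hx').
  have [hy|hy] := lerP y (-1); first (rewrite (ce_lo _ hy); split; lra).
  have [hy'|hy'] := lerP 1 y; first (rewrite (ce_hi _ hy'); split; lra).
  rewrite ce_mid; first (split; lra). apply/andP; split; lra.
rewrite (ce_mid x); last by apply/andP; split; lra.
have [hy|hy] := lerP y (-1); first (rewrite (ce_lo _ hy); split; lra).
have [hy'|hy'] := lerP 1 y; first (rewrite (ce_hi _ hy'); split; lra).
rewrite ce_mid; first (split; lra). apply/andP; split; lra.
Qed.

Lemma expand_continuous : continuous (@expand R).
Proof.
move=> x; apply/cvg_ballP => e e0.
apply/nbhs_ballP; exists e => //= t xt.
rewrite /ball /= /ereal_ball.
apply: le_lt_trans (ce_lip _ _) _. exact: xt.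
Qed.

Lemma ereal_compact : compact [set: \bar R].
Proof.
have -> : [set: \bar R] = (@expand R) @` [set r | `|r| <= 1].
  apply/seteqP; split => // y _; exists (contract y); first exact: contract_le1.
  exact: contractK.
apply: continuous_compact; first exact: continuous_subspaceT (@expand_continuous).
have -> : [set r : R | `|r| <= 1] = `[-1, 1]%classic.
  by apply/seteqP; split => r /=; rewrite in_itv /= ler_norml.
exact: segment_compact.
Qed.


Lemma ptws_compact n : compact [set: {ptws 'rV[R]_n -> \bar R}].
Proof.
set S := [set f : {ptws 'rV[R]_n -> \bar R} | forall x, [set: \bar R] (f x)].
have C : compact S := @tychonoff _ (fun _ : 'rV[R]_n => \bar R) (fun _ => setT) (fun _ => ereal_compact).
by have <- : S = setT by apply/seteqP; split.
Qed.

Lemma ptws_eval_nbhs {n} (f : {ptws 'rV[R]_n -> \bar R}) x {A : set (\bar R)} :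
  nbhs (f x) A -> nbhs f [set g : {ptws 'rV[R]_n -> \bar R} | A (g x)].
Proof.
move=> nA.
have h : (nbhs f --> f) := cvg_id.
have := (@pointwise_cvgP _ _ (nbhs f) f (nbhs_filter f)).1 h x.
by apply.
Qed.

Lemma test n (u v : 'rV[R]_n * R^o) t : ((1-t) *: u + t *: v).1 = (1-t) *: u.1 + t *: v.1 /\
  ((1-t) *: u + t *: v).2 = (1-t) * u.2 + t * v.2.
Proof. by []. Qed.


Lemma ereal_dense_above (c0 : R) (y : \bar R) : (c0%:E < y)%E ->
  exists2 c : R, c0 < c & (c%:E < y)%E.
Proof.
case: y => [r| |] //= h.
- exists ((c0 + r) / 2); rewrite ?lte_fin; rewrite lte_fin in h; lra.
- by exists (c0 + 1); [lra | exact: ltry].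
Qed.

Lemma ereal_dense_below (c0 : R) (y : \bar R) : (y < c0%:E)%E ->
  exists2 c : R, c < c0 & (y < c%:E)%E.
Proof.
case: y => [r| |] //= h.
- exists ((c0 + r) / 2); rewrite ?lte_fin; rewrite lte_fin in h; lra.
- by exists (c0 - 1); [lra | exact: ltNyr].
Qed.

Lemma closure_gen_affine n (H : set ('rV[R]_n -> \bar R)) (f : 'rV[R]_n -> \bar R) :
  H `<=` gen_affine (R := R) (n := n) ->
  closure (H : set {ptws 'rV[R]_n -> \bar R}) f -> gen_affine f.
Proof.
move=> HG cl; split.
- move=> u v t t01 fu fv; rewrite /epigraph /= in fu fv *.
  rewrite leNgt; apply/negP => hlt.
  have hsc : forall a b : R, a *: (b : R^o) = a * b by [].
  rewrite !hsc in hlt.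
  move: hlt; set c0 := (1 - t) * u.2 + t * v.2 => hlt.
  have [c c0c cfw] := ereal_dense_above _ _ hlt.
  set e := (c - c0) / 2.
  have e0 : 0 < e by rewrite /e; lra.
  have ue : (u.2%:E < (u.2 + e)%:E)%E by rewrite lte_fin; lra.
  have ve : (v.2%:E < (v.2 + e)%:E)%E by rewrite lte_fin; lra.
  have N1 := ptws_eval_nbhs (f : {ptws 'rV[R]_n -> \bar R}) u.1
    (open_ereal_lt' (le_lt_trans fu ue)).
  have N2 := ptws_eval_nbhs (f : {ptws 'rV[R]_n -> \bar R}) v.1
    (open_ereal_lt' (le_lt_trans fv ve)).
  have N3 := ptws_eval_nbhs (f : {ptws 'rV[R]_n -> \bar R}) _ (open_ereal_gt' cfw).
  have [g [Hg [g1 [g2 g3]]]] := cl _ (filterI N1 (filterI N2 N3)).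
  have := (HG g Hg).1 (u.1, u.2 + e) (v.1, v.2 + e) t t01 (ltW g1) (ltW g2).
  rewrite /epigraph /= => hg.
  have := lt_le_trans g3 hg; rewrite lte_fin !hsc.
  have -> : (1 - t) * (u.2 + e) + t * (v.2 + e) = c0 + e.
    by rewrite /c0; ring.
  rewrite /e; lra.
- move=> u v t t01 fu fv; rewrite /hypograph /= in fu fv *.
  rewrite leNgt; apply/negP => hlt.
  have hsc : forall a b : R, a *: (b : R^o) = a * b by [].
  rewrite !hsc in hlt.
  move: hlt; set c0 := (1 - t) * u.2 + t * v.2 => hlt.
  have [c c0c cfw] := ereal_dense_below _ _ hlt.
  set e := (c0 - c) / 2.
  have e0 : 0 < e by rewrite /e; lra.
  have ue : ((u.2 - e)%:E < u.2%:E)%E by rewrite lte_fin; lra.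
  have ve : ((v.2 - e)%:E < v.2%:E)%E by rewrite lte_fin; lra.
  have N1 := ptws_eval_nbhs (f : {ptws 'rV[R]_n -> \bar R}) u.1
    (open_ereal_gt' (lt_le_trans ue fu)).
  have N2 := ptws_eval_nbhs (f : {ptws 'rV[R]_n -> \bar R}) v.1
    (open_ereal_gt' (lt_le_trans ve fv)).
  have N3 := ptws_eval_nbhs (f : {ptws 'rV[R]_n -> \bar R}) _ (open_ereal_lt' cfw).
  have [g [Hg [g1 [g2 g3]]]] := cl _ (filterI N1 (filterI N2 N3)).
  have := (HG g Hg).2 (u.1, u.2 - e) (v.1, v.2 - e) t t01 (ltW g1) (ltW g2).
  rewrite /hypograph /= => hg.
  have := le_lt_trans hg g3; rewrite lte_fin !hsc.
  have -> : (1 - t) * (u.2 - e) + t * (v.2 - e) = c0 - e.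
    by rewrite /c0; ring.
  rewrite /e; lra.
Qed.
End Aux.

Theorem theorem4 (R : realType) (n : nat)
  (lambda : {measure set (borelE R n) -> \bar R})
  (H : set ('rV[R]_n -> \bar R)) :
  H !=set0 ->
  H `<=` gen_affine (R := R) (n := n) ->
  (forall h, H h -> (\int[lambda]_x expeR (h x) = 1)%E) ->
  forall x : 'rV[R]_n,
    exists2 hbar : 'rV[R]_n -> \bar R,
      gen_affine hbar /\ closure (H : set {ptws 'rV[R]_n -> \bar R}) hbar &
      hbar x = ereal_sup [set h x | h in H].
Proof.
move=> [h0 Hh0] HG _ x.
set s := ereal_sup [set h x | h in H].
have [[h1 Hh1 h1x]|nat] := pselect (exists2 h, H h & h x = s).
  by exists h1 => //; split; [exact: HG | exact: subset_closure].
have lts : forall h, H h -> (h x < s)%E.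
  move=> h Hh; rewrite lt_neqAle; apply/andP; split.
    by apply/eqP => e; apply: nat; exists h.
  by apply: ereal_sup_ubound; exists h.
pose D := [set r : \bar R | (r < s)%E].
pose B := fun r : \bar R =>
  [set h : {ptws 'rV[R]_n -> \bar R} | H h /\ (r <= h x)%E].
have FF : ProperFilter (filter_from D B).
  apply: filter_from_proper.
    apply: filter_from_filter; first by exists (h0 x); exact: lts.
    move=> i j Di Dj; exists (Order.max i j).
      by rewrite /D /= gt_max Di Dj.
    by move=> h [Hh]; rewrite ge_max => /andP[hi hj].
  move=> i Di; have [y [h Hh <-] iy] := ereal_sup_gt Di.
  by exists h; split => //; exact: ltW.
have FB : forall r, D r -> filter_from D B (B r) by move=> r Dr; exists r.
have [hbar [_ clh]] := @ptws_compact R n _ FF filterT.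
have cl : closure (H : set {ptws 'rV[R]_n -> \bar R}) hbar.
  move=> C nC; have [h [[Hh _] Ch]] := clh _ _ (FB _ (lts _ Hh0)) nC.
  by exists h.
exists hbar; first by split => //; exact: closure_gen_affine cl.
apply/eqP; rewrite eq_le; apply/andP; split.
- rewrite leNgt; apply/negP => sh.
  have nb := @ptws_eval_nbhs R n hbar x _ (open_ereal_gt' sh).
  have [h [[Hh _] /= shx]] := clh _ _ (FB _ (lts _ Hh0)) nb.
  by have := lt_trans shx (lts h Hh); rewrite ltxx.
- rewrite leNgt; apply/negP => hs.
  have [y [h Hh <-] hy] := ereal_sup_gt hs.
  have nb := @ptws_eval_nbhs R n hbar x _ (open_ereal_lt' hy).
  have [g [[Hg hg] /= gh]] := clh _ _ (FB _ (lts _ Hh)) nb.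
  by have := le_lt_trans hg gh; rewrite ltxx.
Qed.
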